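(* Let $q,q',n$ be integers with $q'\ge 2q+1$, $q>1$ and $n>1$. Let $S$ be an $\mathcal{OS}_q(n)$ of period $m$ with ring sequence $[s_0,\ldots,s_{m-1}]$ where $s_0=0$. For $x\in\mathbb{Z}_q$ let $x'$ denote the class in $\mathbb{Z}_{q'}$ of the integer in $\{0,\ldots,q-1\}$ representing $x$. Define $t_i=(-1)^{i+m-1}s_i'$ if $s_i'\neq0$ and $t_i=(-1)^{i+m-1}q$ if $s_i'=0$ ($0\le i\le m-1$). Let $U$ be the periodic sequence over $\mathbb{Z}_{q'}$ with ring sequence \[[s_0',\ldots,s_{m-1}',\,-s_0',\ldots,-s_{m-1}',\,t_0,\ldots,t_{m-1},\,-t_0,\ldots,-t_{m-1}].\] Then $U$ is an $\mathcal{SOS}_{q'}(n)$ of period $4m$ with $w_{q'}(U)=0$.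
   Context: For a periodic sequence $S=(s_i)$ write $\mathbf{s}_n(i)=(s_i,\ldots,s_{i+n-1})$; $\mathbf{u}^R$ is the reverse of a tuple and $-\mathbf{u}$ its termwise negative. An $n$-window sequence of period $m$ satisfies $\mathbf{s}_n(i)=\mathbf{s}_n(j)\Rightarrow i\equiv j\pmod m$. An $\mathcal{OS}_q(n)$ is a $q$-ary $n$-window sequence with $\mathbf{s}_n(i)\neq\mathbf{s}_n(j)^R$ for all $i,j$; an $\mathcal{SOS}_q(n)$ is an $\mathcal{OS}_q(n)$ with also $\mathbf{s}_n(i)\neq-\mathbf{s}_n(j)^R$ for all $i,j$. The ring sequence of a sequence of period $m$ is one period. The weight $w(U)$ is the integer sum of one period with terms taken in $\{0,\ldots,q'-1\}$; $w_{q'}(U)=w(U)\bmod q'$. *)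

(* Defs.v *)
From mathcomp Require Import all_boot all_order all_algebra.
Set Implicit Arguments. Unset Strict Implicit. Unset Printing Implicit Defensive.
Import GRing.Theory.
Local Open Scope ring_scope.

(* A periodic sequence is represented by its ring sequence r (one period);
   its period is m = size r and its i-th term is r_(i mod m). *)
Definition term {T : zmodType} (r : seq T) (i : nat) : T := nth 0 r (i %% size r).

Definition window {T : zmodType} (r : seq T) (n i : nat) : seq T :=
  mkseq (fun k => term r (i + k)) n.

Definition is_window_seq {T : zmodType} (r : seq T) (n : nat) : Prop :=
  forall i j : nat, window r n i = window r n j -> i = j %[mod size r].

Definition is_OS {T : zmodType} (r : seq T) (n : nat) : Prop :=
  is_window_seq r n /\
  forall i j : nat, window r n i <> rev (window r n j).

Definition is_SOS {T : zmodType} (r : seq T) (n : nat) : Prop :=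
  is_OS r n /\
  forall i j : nat, window r n i <> map -%R (rev (window r n j)).

Definition weight (q' : nat) (r : seq 'Z_q') : nat := \sum_(x <- r) (x : nat).

(* Main.v *)
Require Import Defs.
From mathcomp Require Import all_boot all_order all_algebra.
From mathcomp Require Import zify.
Import GRing.Theory.

Definition VV (r q c : nat) (e : bool) (b : nat) : nat :=
  let a := if c == 0 then q else c in
  if b == 0 then c
  else if b == 1 then (if c == 0 then 0 else r - c)
  else if b == 2 then (if e then r - a else a)
  else (if e then a else r - a).

Ltac crush := repeat (match goal with
  | |- context [if ?b then _ else _] => case: b
  | H : context [if ?b then _ else _] |- _ => move: H
  | |- context [?c == 0] => case: (c =P 0) => ?
  end); simpl; try lia.

Lemma step1_nc r q c1 c2 e B : 2 * q + 1 <= r -> c1 < q -> c2 < q -> B < 4 ->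
  VV r q c1 e B = VV r q c1 e ((B + 1) %% 4) ->
  VV r q c2 (~~ e) B = VV r q c2 (~~ e) ((B + 1) %% 4) -> B = 0.
Proof.
rewrite /VV => hr h1 h2.
case: B => [|[|[|[|B]]]] //= _; case: e; case: (c1 =P 0) => ?; case: (c2 =P 0) => ? /=; lia.
Qed.

Lemma step1_cr r q c1 e2 B : 2 * q + 1 <= r -> 1 < q -> c1 < q -> B < 4 ->
  VV r q c1 false B = VV r q c1 false ((B + 1) %% 4) ->
  VV r q 0 e2 ((B + 1) %% 4) = VV r q 0 e2 ((B + 2) %% 4) -> False.
Proof.
rewrite /VV => hr hq h1.
case: B => [|[|[|[|B]]]] //= _; case: e2; case: (c1 =P 0) => ? /=; lia.
Qed.

Lemma single1 r q c e : 2 * q + 1 <= r -> c < q ->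
  VV r q c e 0 = VV r q c e 1 -> c = 0.
Proof. rewrite /VV => hr h1 /=; case: (c =P 0) => ? /=; lia. Qed.

Lemma step2_nc r q c1 c2 e B : 2 * q + 1 <= r -> c1 < q -> c2 < q -> B < 4 ->
  VV r q c1 e B = VV r q c1 e ((B + 2) %% 4) ->
  VV r q c2 (~~ e) B = VV r q c2 (~~ e) ((B + 2) %% 4) -> False.
Proof.
rewrite /VV => hr h1 h2.
case: B => [|[|[|[|B]]]] //= _; case: e; case: (c1 =P 0) => ?; case: (c2 =P 0) => ? /=; lia.
Qed.

Lemma step2_cr r q e2 B : 2 * q + 1 <= r -> 1 < q -> B < 4 ->
  VV r q 0 e2 B = VV r q 0 e2 ((B + 2) %% 4) -> False.
Proof.
rewrite /VV => hr hq.
case: B => [|[|[|[|B]]]] //= _; case: e2 => /=; lia.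
Qed.

Arguments step1_nc {r q c1 c2 e B}.
Arguments step1_cr {r q c1 e2 B}.
Arguments single1 {r q c e}.
Arguments step2_nc {r q c1 c2 e B}.
Arguments step2_cr {r q e2 B}.

Lemma divmod_eq m x Q R : 0 < m -> R < m -> x = Q * m + R -> x %/ m = Q /\ x %% m = R.
Proof. move=> m0 Rm ->; rewrite divnMDl // divn_small // addn0 modnMDl modn_small //. Qed.

Lemma succ_nc m x : 0 < m -> x %% m + 1 < m -> (x + 1) %% m = x %% m + 1 /\ (x + 1) %/ m = x %/ m.
Proof.
move=> m0 h; case: (@divmod_eq m (x + 1) (x %/ m) (x %% m + 1) m0 h) => [|-> ->] //.
by rewrite {1}(divn_eq x m) addnA.
Qed.

Lemma succ_cr m x : 0 < m -> x %% m + 1 = m -> (x + 1) %% m = 0 /\ (x + 1) %/ m = x %/ m + 1.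
Proof.
move=> m0 h; case: (@divmod_eq m (x + 1) (x %/ m + 1) 0 m0 m0) => [|-> ->] //.
by rewrite {1}(divn_eq x m) -addnA h mulnDl mul1n addn0.
Qed.

Lemma shift_j m x j : 0 < m -> (x + j * m) %% m = x %% m /\ (x + j * m) %/ m = x %/ m + j.
Proof.
move=> m0; case: (@divmod_eq m (x + j * m) (x %/ m + j) (x %% m) m0 (ltn_pmod x m0)) => [|-> ->] //.
by rewrite {1}(divn_eq x m) mulnDl addnAC.
Qed.
Import GRing.Theory.
Local Open Scope ring_scope.

Lemma valZ_nat (r k : nat) : (1 < r)%N -> (k < r)%N -> nat_of_ord (k%:R : 'Z_r) = k.
Proof. by move=> r1 kr; rewrite val_Zp_nat // modn_small. Qed.

Lemma valZ_lt (r : nat) (x : 'Z_r) : (1 < r)%N -> (nat_of_ord x < r)%N.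
Proof. by move=> r1; move: (ltn_ord x); rewrite [X in (_ < X)%N -> _]Zp_cast. Qed.

Lemma valZ_opp (r : nat) (x : 'Z_r) : (1 < r)%N -> nat_of_ord (-x) = ((r - nat_of_ord x) %% r)%N.
Proof.
move=> r1.
have -> : -x = (r - nat_of_ord x)%:R.
  apply/eqP; rewrite eq_sym -subr_eq0 opprK -[x in _ + x]natr_Zp -natrD subnK.
    by apply/eqP/val_inj; rewrite /= val_Zp_nat // modnn.
  exact/ltnW/valZ_lt.
by rewrite val_Zp_nat.
Qed.

Definition cc {q} (s : seq 'Z_q) i : nat := nth 0 s i.
Definition aa q (s : seq 'Z_q) i : nat := if cc s i == 0%N then q else cc s i.
Definition ee {q} (s : seq 'Z_q) i := odd (i + size s - 1).
Definition Vf q r (s : seq 'Z_q) b i : nat :=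
  if b == 0%N then cc s i
  else if b == 1%N then (if cc s i == 0%N then 0 else r - cc s i)%N
  else if b == 2%N then (if ee s i then r - aa q s i else aa q s i)%N
  else (if ee s i then aa q s i else r - aa q s i)%N.

Definition sp {q} r (s : seq 'Z_q) : seq 'Z_r := [seq (nat_of_ord x)%:R | x <- s].
Definition tseq q r (s : seq 'Z_q) : seq 'Z_r :=
    mkseq (fun i => (-1) ^+ (i + size s - 1) *
                    (if nth 0 (sp r s) i != 0 then nth 0 (sp r s) i else q%:R)) (size s).
Definition Us q r (s : seq 'Z_q) : seq 'Z_r :=
  sp r s ++ map -%R (sp r s) ++ tseq q r s ++ map -%R (tseq q r s).

Lemma cc_lt {q} (s : seq 'Z_q) i : (1 < q)%N -> (cc s i < q)%N.
Proof. move=> q1; exact: valZ_lt. Qed.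

Lemma mod4m x m : (0 < m)%N -> (x %% (4 * m) = (x %/ m %% 4) * m + x %% m)%N.
Proof.
move=> m0.
have e1 := divn_eq x m. have e2 := divn_eq (x %/ m) 4.
have h1 : (x %% m < m)%N by rewrite ltn_mod.
have h2 : (x %/ m %% 4 < 4)%N by rewrite ltn_mod.
have ex : x = ((x %/ m %/ 4) * (4 * m) + ((x %/ m %% 4) * m + x %% m))%N.
  by rewrite {1}e1 {1}e2 mulnDl -mulnA (mulnC 4 m) addnA.
rewrite {1}ex modnMDl modn_small //.
have h3 : ((x %/ m %% 4).+1 * m <= 4 * m)%N by rewrite leq_mul2r h2 orbT.
rewrite mulSn in h3; move: h1 h3; generalize (x %/ m %% 4 * m)%N (x %% m)%N => a b. lia.
Qed.

Lemma size_Us q r s : size (Us q r s) = (4 * size s)%N.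
Proof. rewrite /Us /tseq /sp !size_cat !size_map size_iota; lia. Qed.

Lemma valU q r (s : seq 'Z_q) x : (2 * q + 1 <= r)%N -> (1 < q)%N -> (0 < size s)%N ->
  nat_of_ord (term (Us q r s) x) = Vf q r s (x %/ size s %% 4)%N (x %% size s)%N.
Proof.
move=> hr hq hm.
have r1 : (1 < r)%N by lia.
rewrite /term size_Us mod4m //.
set b := (x %/ size s %% 4)%N; set i := (x %% size s)%N.
have hi : (i < size s)%N by rewrite ltn_mod.
have hb : (b < 4)%N by rewrite ltn_mod.
have hc := cc_lt s i hq.
have sv : nth 0 (sp r s) i = (cc s i)%:R :> 'Z_r.
  by rewrite (nth_map 0).
have tv : nat_of_ord (nth 0 (tseq q r s) i)
     = (if ee s i then r - aa q s i else aa q s i)%N.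
  rewrite nth_mkseq // sv -signr_odd /ee /aa.
  have -> : ((cc s i)%:R != 0 :> 'Z_r) = (cc s i != 0%N).
    congr negb; apply/eqP/eqP => h; last by rewrite h.
    by have := congr1 (@nat_of_ord _) h; rewrite valZ_nat //; lia.
  case: odd; rewrite ?expr0 ?expr1 ?mulN1r ?mul1r;
    do 2 case: ifP => /eqP ?; rewrite ?valZ_opp // ?valZ_nat; try lia;
    rewrite modn_small; lia.
have ssp : size (sp r s) = size s by rewrite size_map.
have stq : size (tseq q r s) = size s by rewrite size_mkseq.
rewrite /Vf -/b /Us.
case: b hb => [|[|[|[|b]]]] // _.
- by rewrite mul0n add0n nth_cat ssp hi sv valZ_nat //; lia.
- rewrite mul1n nth_cat ssp ltnNge leq_addr /= addKn nth_cat size_map ssp hi (nth_map 0) ?ssp // sv.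
  rewrite valZ_opp // valZ_nat; try lia.
  case: eqP => h; first by rewrite h subn0 modnn.
  rewrite modn_small; lia.
- rewrite nth_cat ssp ltnNge (_ : size s <= _)%N /=; last lia.
  rewrite nth_cat size_map ssp ltnNge (_ : size s <= _)%N /=; last lia.
  rewrite nth_cat stq (_ : (_ - _ - _ < _)%N); last lia.
  by rewrite (_ : (_ - _ - _ = i)%N) //; lia.
- rewrite nth_cat ssp ltnNge (_ : size s <= _)%N /=; last lia.
  rewrite nth_cat size_map ssp ltnNge (_ : size s <= _)%N /=; last lia.
  rewrite nth_cat stq ltnNge (_ : size s <= _)%N /=; last lia.
  rewrite (_ : (_ - _ - _ - _ = i)%N); last lia.
  rewrite (nth_map 0) ?stq // valZ_opp // tv.
  rewrite /aa; case: ee; case: eqP => h; rewrite modn_small; lia.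
Qed.

Lemma Vf_VV q r (s : seq 'Z_q) b i : Vf q r s b i = VV r q (cc s i) (ee s i) b.
Proof. by []. Qed.

Lemma eq_shiftU q r (s : seq 'Z_q) x j : (2 * q + 1 <= r)%N -> (1 < q)%N -> (0 < size s)%N ->
  term (Us q r s) x = term (Us q r s) (x + j * size s)%N ->
  VV r q (cc s (x %% size s)) (ee s (x %% size s)) (x %/ size s %% 4) =
  VV r q (cc s (x %% size s)) (ee s (x %% size s)) ((x %/ size s %% 4 + j) %% 4).
Proof.
move=> hr hq hm /(congr1 (@nat_of_ord _)); rewrite !valU //.
by have [-> ->] := @shift_j _ x j hm; rewrite modnDml.
Qed.

Lemma ee_succ q (s : seq 'Z_q) I : (0 < size s)%N -> ee s (I + 1) = ~~ ee s I.
Proof. by move=> hm; rewrite /ee (_ : (I + 1 + size s - 1 = (I + size s - 1).+1)%N) ?oddS //; lia. Qed.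

Lemma ee_last q (s : seq 'Z_q) : (0 < size s)%N -> ee s (size s - 1) = false.
Proof. by move=> hm; rewrite /ee (_ : (size s - 1 + size s - 1 = (size s - 1).*2)%N) ?odd_double //; lia. Qed.

Lemma cc0 q (s : seq 'Z_q) : nth 0 s 0 = 0 -> cc s 0 = 0%N.
Proof. by rewrite /cc => ->. Qed.

Lemma pair1 q r (s : seq 'Z_q) x : (2 * q + 1 <= r)%N -> (1 < q)%N -> (0 < size s)%N ->
  nth 0 s 0 = 0 ->
  term (Us q r s) x = term (Us q r s) (x + 1 * size s)%N ->
  term (Us q r s) (x + 1)%N = term (Us q r s) (x + 1 + 1 * size s)%N ->
  (x %/ size s %% 4 = 0)%N /\ ((x + 1) %/ size s %% 4 = 0)%N.
Proof.
move=> hr hq hm h0 /eq_shiftU-/(_ hr hq hm) E1 /eq_shiftU-/(_ hr hq hm) E2.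
have hI := ltn_pmod x hm.
have hB : (x %/ size s %% 4 < 4)%N by rewrite ltn_mod.
case: (ltnP (x %% size s + 1) (size s)) => hx.
- have [e1 e2] := @succ_nc _ x hm hx.
  rewrite e1 e2 ee_succ // in E2; rewrite e2.
  have := step1_nc hr (cc_lt s _ hq) (cc_lt s _ hq) hB E1 E2; lia.
- have hx' : (x %% size s + 1 = size s)%N by lia.
  have [e1 e2] := @succ_cr _ x hm hx'.
  rewrite e1 e2 cc0 // in E2.
  rewrite (_ : x %% size s = size s - 1)%N in E1; last lia.
  rewrite ee_last // in E1.
  exfalso; apply: (step1_cr (e2 := ee s 0) hr hq (cc_lt s _ hq) hB E1).
  move: E2; rewrite !modnDml -addnA => ->; done.
Qed.

Arguments pair1 {q r s x}.
Arguments eq_shiftU {q r s x j}.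

Lemma pair2 q r (s : seq 'Z_q) x : (2 * q + 1 <= r)%N -> (1 < q)%N -> (0 < size s)%N ->
  nth 0 s 0 = 0 ->
  term (Us q r s) x = term (Us q r s) (x + 2 * size s)%N ->
  term (Us q r s) (x + 1)%N = term (Us q r s) (x + 1 + 2 * size s)%N -> False.
Proof.
move=> hr hq hm h0 /eq_shiftU-/(_ hr hq hm) E1 /eq_shiftU-/(_ hr hq hm) E2.
have hI := ltn_pmod x hm.
case: (ltnP (x %% size s + 1) (size s)) => hx.
- have [e1 e2] := @succ_nc _ x hm hx.
  rewrite e1 e2 ee_succ // in E2.
  have hB : (x %/ size s %% 4 < 4)%N by rewrite ltn_mod.
  exact: (step2_nc hr (cc_lt s _ hq) (cc_lt s _ hq) hB E1 E2).
- have hx' : (x %% size s + 1 = size s)%N by lia.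
  have [e1 e2] := @succ_cr _ x hm hx'.
  rewrite e1 e2 cc0 // in E2.
  have hB : ((x %/ size s + 1) %% 4 < 4)%N by rewrite ltn_mod.
  apply: (step2_cr (e2 := ee s 0) hr hq hB); move: E2; rewrite !modnDml; done.
Qed.

Arguments pair2 {q r s x}.

Lemma term_s0 q (s : seq 'Z_q) x : (1 < q)%N -> cc s (x %% size s) = 0%N -> term s x = 0.
Proof. by move=> hq h; apply: val_inj; rewrite /= -h. Qed.

Lemma noshift1 q r (s : seq 'Z_q) n p : (2 * q + 1 <= r)%N -> (1 < q)%N -> (0 < size s)%N ->
  (1 < n)%N -> is_OS s n -> nth 0 s 0 = 0 ->
  (forall k, (k < n)%N -> term (Us q r s) (p + k)%N = term (Us q r s) (p + k + 1 * size s)%N) ->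
  False.
Proof.
move=> hr hq hm hn [_ OS2] h0 H.
have hb : forall k, (k < n)%N -> ((p + k) %/ size s %% 4 = 0)%N.
  case=> [|k] kn.
    have E : term (Us q r s) (p + 0 + 1)%N = term (Us q r s) (p + 0 + 1 + 1 * size s)%N.
      by rewrite -addnA; apply: H.
    by case: (pair1 hr hq hm h0 (H 0%N kn) E).
  have E : term (Us q r s) (p + k + 1)%N = term (Us q r s) (p + k + 1 + 1 * size s)%N.
    by rewrite -(addnA p k 1); apply: H; lia.
  by case: (pair1 hr hq hm h0 (H k (ltnW kn)) E) => _; rewrite -(addn1 k) addnA.
have hc : forall k, (k < n)%N -> term s (p + k)%N = 0.
  move=> k kn; apply: term_s0 => //.
  have := eq_shiftU hr hq hm (H k kn); rewrite hb //.
  exact: single1 hr (cc_lt s _ hq).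
have hw : window s n p = nseq n 0.
  apply: (@eq_from_nth _ 0); first by rewrite size_mkseq size_nseq.
  move=> k; rewrite size_mkseq => kn; rewrite nth_mkseq // nth_nseq kn; exact: hc.
by apply: (OS2 p p); rewrite hw rev_nseq.
Qed.

Definition phi q r (v : 'Z_r) : 'Z_q :=
  (if (nat_of_ord v <= q)%N then nat_of_ord v else (r - nat_of_ord v)%N)%:R.

Lemma phi_good q r (v : 'Z_r) c : (2 * q + 1 <= r)%N -> (1 < q)%N -> (c <= q)%N ->
  (nat_of_ord v = c \/ (0 < c)%N /\ nat_of_ord v = (r - c)%N) ->
  phi q r v = c%:R /\ phi q r (- v) = c%:R.
Proof.
move=> hr hq hc H; have r1 : (1 < r)%N by lia.
rewrite /phi valZ_opp //.
case: H => [->|[c0 ->]].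
  split; first by rewrite hc.
  case: (c =P 0%N) => [->|h]; first by rewrite subn0 modnn.
  rewrite modn_small; last lia.
  rewrite ifF; last by apply/negbTE; rewrite -ltnNge; lia.
  by congr (_%:R); lia.
split.
  rewrite ifF; last by apply/negbTE; rewrite -ltnNge; lia.
  by congr (_%:R); lia.
rewrite (_ : r - (r - c) = c)%N; last lia.
by rewrite modn_small ?hc //; lia.
Qed.

Lemma phiU q r (s : seq 'Z_q) x : (2 * q + 1 <= r)%N -> (1 < q)%N -> (0 < size s)%N ->
  phi q r (term (Us q r s) x) = term s x /\ phi q r (- term (Us q r s) x) = term s x.
Proof.
move=> hr hq hm.
have hts : term s x = (cc s (x %% size s))%:R by rewrite /term /cc natr_Zp.
have haa : ((aa q s (x %% size s))%:R : 'Z_q) = term s x.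
  rewrite hts /aa; case: eqP => // ->.
  by apply: val_inj; rewrite /= val_Zp_nat // modnn.
have hc := cc_lt s (x %% size s) hq.
have hb : (x %/ size s %% 4 < 4)%N by rewrite ltn_mod.
suff [c [h1 [h2 h3]]] : exists c, (c <= q)%N /\ (c%:R : 'Z_q) = term s x /\
   (nat_of_ord (term (Us q r s) x) = c \/ (0 < c)%N /\ nat_of_ord (term (Us q r s) x) = (r - c)%N).
  by rewrite -h2; apply: (@phi_good q r _ c hr hq h1 h3).
rewrite valU // Vf_VV /VV.
move: haa; rewrite /aa.
case: (x %/ size s %% 4)%N hb => [|[|[|[|b]]]] // _ /= haa.
- by exists (cc s (x %% size s)); split; [lia | split; [by rewrite hts | left]].
- exists (cc s (x %% size s)); split; [lia | split; [by rewrite hts |]].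
  case: eqP => h; [by left | right; split; lia].
- exists (if cc s (x %% size s) == 0%N then q else cc s (x %% size s)).
  split; first by case: eqP => ?; lia.
  split; first by [].
  case: ee; [right; split => //; case: eqP => ?; lia | by left].
- exists (if cc s (x %% size s) == 0%N then q else cc s (x %% size s)).
  split; first by case: eqP => ?; lia.
  split; first by [].
  case: ee; [by left | right; split => //; case: eqP => ?; lia].
Qed.

Lemma map_phi_window q r (s : seq 'Z_q) n x : (2 * q + 1 <= r)%N -> (1 < q)%N -> (0 < size s)%N ->
  map (phi q r) (window (Us q r s) n x) = window s n x.
Proof.
move=> hr hq hm; rewrite /window /mkseq -map_comp; apply: eq_map => k /=.
by case: (@phiU q r s (x + k) hr hq hm).
Qed.

Lemma map_phiN_window q r (s : seq 'Z_q) n x : (2 * q + 1 <= r)%N -> (1 < q)%N -> (0 < size s)%N ->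
  map (phi q r) (map -%R (window (Us q r s) n x)) = window s n x.
Proof.
move=> hr hq hm; rewrite /window /mkseq -!map_comp; apply: eq_map => k /=.
by case: (@phiU q r s (x + k) hr hq hm).
Qed.

Lemma weightU q r (s : seq 'Z_q) : (2 * q + 1 <= r)%N -> (1 < q)%N -> (weight (Us q r s) %% r = 0)%N.
Proof.
move=> hr hq; have r1 : (1 < r)%N by lia.
have -> : (weight (Us q r s) %% r)%N = nat_of_ord ((weight (Us q r s))%:R : 'Z_r).
  by rewrite val_Zp_nat.
rewrite /weight natr_sum.
under eq_bigr => x _ do rewrite natr_Zp.
have E (l : seq 'Z_r) : \sum_(x <- map -%R l) x = - \sum_(x <- l) x.
  by rewrite big_map sumrN.
have C (l1 l2 : seq 'Z_r) : \sum_(x <- l1 ++ l2) x = \sum_(x <- l1) x + \sum_(x <- l2) x.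
  by rewrite big_cat.
by rewrite /Us !C !E addNKr addrN.
Qed.

Lemma termU_mod q r (s : seq 'Z_q) y y' : (y %% (4 * size s) = y' %% (4 * size s))%N ->
  term (Us q r s) y = term (Us q r s) y'.
Proof. by rewrite /term size_Us => ->. Qed.

Theorem corollary3p18 (q r n : nat) (s : seq 'Z_q) :
  (2 * q + 1 <= r)%N -> (1 < q)%N -> (1 < n)%N ->
  (0 < size s)%N -> is_OS s n -> nth 0 s 0 = 0 ->
  let m := size s in
  let s' : seq 'Z_r := [seq (nat_of_ord x)%:R | x <- s] in
  let t : seq 'Z_r :=
    mkseq (fun i => (-1) ^+ (i + m - 1) *
                    (if nth 0 s' i != 0 then nth 0 s' i else q%:R)) m in
  let U : seq 'Z_r := s' ++ map -%R s' ++ t ++ map -%R t in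
  [/\ is_SOS U n, size U = (4 * m)%N & (weight U %% r = 0)%N].
Proof.
move=> hr hq hn hm OS h0 m s' t U.
change U with (Us q r s).
split; [|exact: size_Us|exact: weightU].
have [OS1 OS2] := OS.
have MW x := @map_phi_window q r s n x hr hq hm.
have MN x := @map_phiN_window q r s n x hr hq hm.
split; [split|].
- move=> i j Hw.
  have Hs : window s n i = window s n j.
    by rewrite -MW Hw MW.
  have Hij := OS1 i j Hs.
  rewrite size_Us.
  move: {Hs} Hw Hij.
  wlog hle : i j / (i %% (4 * size s) <= j %% (4 * size s))%N.
    move=> W Hw Hij; case: (leqP (i %% (4 * size s)) (j %% (4 * size s))) => h.
      exact: W.
    apply/esym; apply: W; [exact: ltnW | by rewrite Hw | exact/esym].
  move=> Hw Hij.
  have IJ : ((i %% (4 * size s)) %% size s = (j %% (4 * size s)) %% size s)%N.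
    by rewrite !modn_dvdm ?dvdn_mull.
  have dv : (size s %| j %% (4 * size s) - i %% (4 * size s))%N.
    by rewrite -eqn_mod_dvd // IJ.
  set I := (i %% (4 * size s))%N in hle IJ dv *.
  set J := (j %% (4 * size s))%N in hle IJ dv *.
  have eK := esym (divnK dv).
  set K := ((J - I) %/ size s)%N in eK.
  have JM : (J < 4 * size s)%N by rewrite ltn_mod muln_gt0 hm.
  have K4 : (K < 4)%N.
    by rewrite -(ltn_pmul2r hm); apply: leq_ltn_trans JM; rewrite -eK leq_subr.
  have hJ : J = (I + K * size s)%N by rewrite -eK subnKC.
  have T : forall k, (k < n)%N -> term (Us q r s) (i + k)%N = term (Us q r s) (i + k + K * size s)%N.
    move=> k kn; have := congr1 (fun w => nth 0 w k) Hw; rewrite /window !nth_mkseq // => ->.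
    apply: termU_mod.
    rewrite -modnDml -/J hJ -[in RHS]addnA -[in RHS]modnDml -/I; congr (_ %% _)%N; lia.
  move: K4 eK hJ T; clearbody K; case: K => [|[|[|[|K]]]] // _ eK hJ T.
  - by apply/eqP; rewrite -/I -/J hJ mul0n addn0.
  - exfalso; apply: (@noshift1 q r s n i hr hq hm hn OS h0 T).
  - exfalso; apply: (@pair2 q r s i hr hq hm h0).
      by have := T 0%N (ltnW hn); rewrite addn0.
    exact: T 1%N hn.
  - exfalso; apply: (@noshift1 q r s n (i + 3 * size s) hr hq hm hn OS h0).
    move=> k kn; rewrite (_ : i + 3 * size s + k = i + k + 3 * size s)%N; last lia.
    rewrite -(T k kn); apply: termU_mod.
    rewrite (_ : i + k + 3 * size s + 1 * size s = i + k + 4 * size s)%N; last lia.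
    by rewrite modnDr.
- move=> i j H; apply: (OS2 i j).
  by rewrite -MW H map_rev MW.
- move=> i j H; apply: (OS2 i j).
  by rewrite -MW H !map_rev MN.
Qed.
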